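(* Let $a\ge 3$ and $A=\begin{pmatrix}0&a&-2\\-a&0&a\\2&-a&0\end{pmatrix}$, with initial cluster $(x_1,x_2,x_3)$. For $k\ge1$ let $(3,1)_k$ denote the alternating mutation path of length $k$ whose first mutation is in direction $1$, i.e. $[1]$, $[3,1]$, $[1,3,1]$, $[3,1,3,1]$, and so on. Then for all $k\ge 1$, $\mathbf{d}(\operatorname{var}_A[(3,1)_k]) < \mathbf{d}(\operatorname{var}_A[(3,1)_{k+1}])$.
   Context: Matrix mutation: $\mu_k(B)=(b'_{ij})$ with $b'_{ij}=-b_{ij}$ if $i=k$ or $j=k$, $b'_{ij}=b_{ij}+\operatorname{sgn}(b_{ik})\max(b_{ik}b_{kj},0)$ otherwise. A seed $((x_1,x_2,x_3),B)$ mutates in direction $k$ to $(x',\mu_kB)$ with $x'_j=x_j$ ($j\ne k$), $x'_k=\big(\prod_{b_{ik}>0}x_i^{b_{ik}}+\prod_{b_{ik}<0}x_i^{-b_{ik}}\big)/x_k$. For a mutation path (mutations applied right to left), $\operatorname{var}_A[\cdot]$ is the cluster variable newly created by the last mutation, starting from the seed $((x_1,x_2,x_3),A)$. The denominator vector $\mathbf{d}(z)=(d_1,d_2,d_3)$ of a cluster variable $z$ is defined by writing $z=N(x_1,x_2,x_3)/(x_1^{d_1}x_2^{d_2}x_3^{d_3})$ with $N$ a polynomial not divisible by any $x_i$ (so $\mathbf{d}(x_i)=-e_i$). The order on denominator vectors is componentwise: $u<v$ means $u_i\le v_i$ for all $i$ and $u\ne v$. *)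

(* Defs.v *)
From HB Require Import structures.
From mathcomp Require Import all_boot all_order all_algebra.
From mathcomp Require Import fraction.
From mathcomp Require Import mpoly.
Set Implicit Arguments. Unset Strict Implicit. Unset Printing Implicit Defensive.
Import Order.TTheory GRing.Theory Num.Theory.
Local Open Scope ring_scope.

(* Ambient field: the field of rational functions Q(x1,x2,x3), realised as the
   fraction field of Z[x1,x2,x3].  Index i : 'I_3 stands for x_(i+1). *)
Definition Poly3 := {mpoly int[3]}.
Definition Frac3 := {fraction Poly3}.

Definition xvar (i : 'I_3) : Frac3 := tofrac ('X_i : Poly3).

Definition exmat := 'M[int]_3.

Definition mutate_mat (k : 'I_3) (B : exmat) : exmat :=
  \matrix_(i < 3, j < 3)
    if (i == k) || (j == k) then - B i j
    else B i j + sgz (B i k) * Num.max (B i k * B k j) 0.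

Definition seed := (('I_3 -> Frac3) * exmat)%type.

Definition mutate_seed (k : 'I_3) (s : seed) : seed :=
  let: (x, B) := s in
  let xk' := ((\prod_(i < 3 | 0 < B i k) x i ^+ `|B i k|%N)
              + (\prod_(i < 3 | B i k < 0) x i ^+ `|B i k|%N)) / x k in
  ((fun j => if j == k then xk' else x j), mutate_mat k B).

Definition init_seed (A : exmat) : seed := (xvar, A).

(* A mutation path is written as in the paper, [k_m; ...; k_2; k_1],
   the mutations being applied right to left (k_1 first). *)
Definition run_path (A : exmat) (p : seq 'I_3) : seed :=
  foldr mutate_seed (init_seed A) p.

(* var_A[p]: the cluster variable newly created by the last mutation of p
   (the head of the list); arbitrary (0) for the empty path. *)
Definition var_path (A : exmat) (p : seq 'I_3) : Frac3 :=
  match p with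
  | [::] => 0
  | k :: _ => (run_path A p).1 k
  end.

Definition is_denom_vector (z : Frac3) (d : 'I_3 -> int) : Prop :=
  exists N : Poly3,
    (forall i : 'I_3, ~ exists M : Poly3, N = 'X_i * M) /\
    z = tofrac N / \prod_(i < 3) xvar i ^ d i.

Definition dvec_lt (u v : 'I_3 -> int) : Prop :=
  (forall i, u i <= v i) /\ u <> v.

(* directions 1 and 3 (0-based indices 0 and 2) *)
Definition dir1 : 'I_3 := @Ordinal 3 0 isT.
Definition dir3 : 'I_3 := @Ordinal 3 2 isT.

(* (3,1)_k : [1], [3,1], [1,3,1], [3,1,3,1], ... (written order) *)
Fixpoint alt31 (k : nat) : seq 'I_3 :=
  match k with
  | 0 => [::]
  | k'.+1 => (if odd k' then dir3 else dir1) :: alt31 k'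
  end.

Definition Amat (a : int) : exmat :=
  \matrix_(i < 3, j < 3)
    match nat_of_ord i, nat_of_ord j with
    | 0, 1 => a   | 0, 2 => -2
    | 1, 0 => - a | 1, 2 => a
    | 2, 0 => 2   | 2, 1 => - a
    | _, _ => 0
    end.

(* Main.v *)
Require Import Defs.
From HB Require Import structures.
From mathcomp Require Import all_boot all_order all_algebra.
From mathcomp Require Import fraction.
From mathcomp Require Import mpoly.
From mathcomp Require Import ring zify.
Import Order.TTheory GRing.Theory Num.Theory.
Local Open Scope ring_scope.


Section Pg.
Variable R : pzRingType.
Variables m e p1 : R.
Fixpoint Pg (n : nat) : R :=
  match n with
  | 0 => 1
  | S n' => match n' with
            | 0 => p1
            | S n'' => m * Pg n' - e * Pg n''
            end
  end.
Lemma PgSS n : Pg n.+2 = m * Pg n.+1 - e * Pg n.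
Proof. by []. Qed.
End Pg.
Arguments Pg {R}.

Lemma Pg_morph (R S : pzRingType) (f : {rmorphism R -> S}) m e p1 n :
  f (Pg m e p1 n) = Pg (f m) (f e) (f p1) n.
Proof.
suff : f (Pg m e p1 n) = Pg (f m) (f e) (f p1) n /\
       f (Pg m e p1 n.+1) = Pg (f m) (f e) (f p1) n.+1 by case.
elim: n => [|n [IH1 IH2]]; first by rewrite /= rmorph1.
split=> //; by rewrite !PgSS rmorphB !rmorphM IH1 IH2.
Qed.

Lemma Pg_pos (m p1 : int) n : m = 2 -> 0 < p1 -> 0 < Pg m 0 p1 n.
Proof.
move=> -> hp.
suff : 0 < Pg 2 0 p1 n /\ 0 < Pg 2 0 p1 n.+1 by case.
elim: n => [|n [IH1 IH2]]; first by split.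
split=> //; rewrite PgSS mul0r subr0; lia.
Qed.

Lemma Pg_one n : Pg (2:int) 1 1 n = 1.
Proof.
suff : Pg (2:int) 1 1 n = 1 /\ Pg (2:int) 1 1 n.+1 = 1 by case.
elim: n => [|n [IH1 IH2]]; first by split.
by split=> //; rewrite PgSS IH1 IH2.
Qed.


Definition dir2 : 'I_3 := @Ordinal 3 1 isT.
Notation x1 := (xvar dir1).
Notation x2 := (xvar dir2).
Notation x3 := (xvar dir3).

Section U.
Variable a : int.
Definition cc : Frac3 := x2 ^+ `|a|%N.
Definition LL : Frac3 := (x1 ^+ 2 + x3 ^+ 2 + cc) / (x1 * x3).
Fixpoint u (n : nat) : Frac3 :=
  match n with
  | 0 => x1
  | S n' => match n' with
            | 0 => x3
            | S n'' => LL * u n' - u n''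
            end
  end.
Lemma uSS n : u n.+2 = LL * u n.+1 - u n. Proof. by []. Qed.

Definition Pp (n : nat) : Poly3 :=
  Pg ('X_dir1 ^+ 2 + 'X_dir3 ^+ 2 + 'X_dir2 ^+ `|a|%N)
     ('X_dir1 ^+ 2 * 'X_dir3 ^+ 2) ('X_dir3 ^+ 2 + 'X_dir2 ^+ `|a|%N) n.
End U.

Lemma xvar_neq0 i : xvar i != 0.
Proof.
rewrite /xvar tofrac_eq0; apply/eqP => H.
have := congr1 (meval (fun _ => 1:int)) H; rewrite mevalXU meval0 => /eqP.
by [].
Qed.


Section Gen.
Variable F : fieldType.
Lemma G1 (x y c : F) : x != 0 -> y != 0 ->
  x ^+ 2 + y ^+ 2 + c = (x ^+ 2 + y ^+ 2 + c) / (x * y) * x * y.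
Proof. move=> hx hy. field. by rewrite hx hy. Qed.
Lemma G2 (x y c : F) : x != 0 -> y != 0 ->
  ((x ^+ 2 + y ^+ 2 + c) / (x * y) * y - x) * (x * y) = y * (y ^+ 2 + c).
Proof. move=> hx hy. field. by rewrite hx hy. Qed.
Lemma G3 (x y M p U1 U2 T0 T1 : F) : x != 0 -> y != 0 ->
  U1 * p = y * T0 -> U2 * (p * (x * y)) = y * T1 ->
  (M / (x * y) * U2 - U1) * (p * (x * y) ^+ 2) = y * (M * T1 - x ^+ 2 * y ^+ 2 * T0).
Proof.
move=> hx hy h1 h2.
have -> : (M / (x * y) * U2 - U1) * (p * (x * y) ^+ 2) =
   M / (x * y) * (x * y) * (U2 * (p * (x * y))) - (U1 * p) * (x * y) ^+ 2 by ring.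
rewrite h1 h2. field. by rewrite hx hy.
Qed.
End Gen.
Lemma u_inv a n : u a n ^+ 2 + u a n.+1 ^+ 2 + cc a = LL a * u a n * u a n.+1.
Proof.
elim: n => [|n IH].
  rewrite [u a 0]/= [u a 1]/= /LL. exact: G1 (xvar_neq0 dir1) (xvar_neq0 dir3).
rewrite uSS.
have -> : cc a = LL a * u a n * u a n.+1 - u a n ^+ 2 - u a n.+1 ^+ 2 by rewrite -IH; ring.
ring.
Qed.

Lemma u_exch a n : u a n.+2 * u a n = u a n.+1 ^+ 2 + cc a.
Proof.
have := u_inv a n. rewrite uSS => h.
have -> : u a n.+1 ^+ 2 + cc a = LL a * u a n * u a n.+1 - u a n ^+ 2 by rewrite -h; ring.
ring.
Qed.

Definition MM a : Frac3 := x1 ^+ 2 + x3 ^+ 2 + cc a.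
Definition EE : Frac3 := x1 ^+ 2 * x3 ^+ 2.

Lemma tofracP0 a : tofrac (Pp a 0) = 1.
Proof. by rewrite /Pp /= rmorph1. Qed.
Lemma tofracP1 a : tofrac (Pp a 1) = x3 ^+ 2 + cc a.
Proof. by rewrite /Pp /= rmorphD !rmorphXn. Qed.
Lemma tofracPSS a n : tofrac (Pp a n.+2) = MM a * tofrac (Pp a n.+1) - EE * tofrac (Pp a n).
Proof.
by rewrite /Pp PgSS rmorphB !rmorphM !rmorphD !rmorphM !rmorphXn.
Qed.

Lemma u_P a m : u a m.+1 * (x1 * x3) ^+ m = x3 * tofrac (Pp a m).
Proof.
have h1 := xvar_neq0 dir1; have h3 := xvar_neq0 dir3.
suff : u a m.+1 * (x1 * x3) ^+ m = x3 * tofrac (Pp a m) /\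
       u a m.+2 * (x1 * x3) ^+ m.+1 = x3 * tofrac (Pp a m.+1) by case.
elim: m => [|m [IH1 IH2]].
  rewrite tofracP0 tofracP1 uSS [u a 0]/= [u a 1]/= /LL /cc. split; first by rewrite expr0 !mulr1.
  rewrite expr1. exact: (@G2 Frac3 _ _ _ h1 h3).
split=> //.
rewrite exprSr in IH2.
have -> : (x1 * x3) ^+ m.+2 = (x1 * x3) ^+ m * (x1 * x3) ^+ 2 by rewrite -exprD addn2.
rewrite tofracPSS uSS /MM /EE /LL. exact: (@G3 Frac3 _ _ _ _ _ _ _ _ h1 h3 IH1 IH2).
Qed.

Lemma Pp_eval a (v : 'I_3 -> int) m :
  meval v (Pp a m) = Pg (v dir1 ^+ 2 + v dir3 ^+ 2 + v dir2 ^+ `|a|%N)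
     (v dir1 ^+ 2 * v dir3 ^+ 2) (v dir3 ^+ 2 + v dir2 ^+ `|a|%N) m.
Proof.
rewrite /Pp (@Pg_morph _ _ (meval v)) /= !mevalD !mevalM !(rmorphXn (meval v)) !mevalXU !expr2; congr (Pg (_ + _ + _ ^+ _) _ (_ + _ ^+ _) _); exact: mevalXU.
Qed.

Lemma Pp_nodiv a (ha : 3 <= a) m (i : 'I_3) : ~ exists M, Pp a m = 'X_i * M.
Proof.
have ha0 : (`|a|%N == 0%N) = false by apply/negbTE; lia.
case=> M HM.
pose v := fun j : 'I_3 => if nat_of_ord j == nat_of_ord i then 0 else 1 : int.
have := congr1 (meval v) HM.
rewrite mevalM mevalXU Pp_eval /v eqxx mul0r.
case: i {HM v} => [[|[|[|i]]] Hi] //=; rewrite ?expr0n ?ha0 ?expr1n /=.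
- move=> h; rewrite mul0r in h. have := @Pg_pos (0+1+1) (1+1) m.
  rewrite h ltxx. by move=> H; move: (H erefl erefl).
- by rewrite !addr0 mulr1 Pg_one => /eqP.
- move=> h; rewrite mulr0 in h. have := @Pg_pos (1+0+1) (0+1) m.
  rewrite h ltxx. by move=> H; move: (H erefl erefl).
Qed.


Lemma sgzN_a (a : int) : 0 < a -> sgz (- a) = -1.
Proof. move=> h; apply: ltr0_sgz; by rewrite oppr_lt0. Qed.

Ltac fin a0 := rewrite ?sgzN ?(gtr0_sgz a0) ?(@gtr0_sgz _ (2:int) isT); nia.

Lemma mut1 a (ha : 3 <= a) : mutate_mat dir1 (Amat a) = - Amat a.
Proof.
have a0 : 0 < a by lia.
apply/matrixP => i j; rewrite !mxE.
case: i => [[|[|[|i]]] Hi] //; case: j => [[|[|[|j]]] Hj] //=; rewrite ?mxE /=;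
  rewrite ?mulr0 ?mul0r ?addr0 ?oppr0 //; fin a0.
Qed.

Lemma mut3 a (ha : 3 <= a) : mutate_mat dir3 (- Amat a) = Amat a.
Proof.
have a0 : 0 < a by lia.
apply/matrixP => i j; rewrite !mxE.
case: i => [[|[|[|i]]] Hi] //; case: j => [[|[|[|j]]] Hj] //=; rewrite ?mxE /=;
  rewrite ?mulr0 ?mul0r ?addr0 ?oppr0 ?opprK //; fin a0.
Qed.


Arguments u : simpl never.
Lemma om3 : (ord_max : 'I_3) = dir3. Proof. exact/val_inj. Qed.
Lemma wom3 : (widen_ord (leqnSn 2) ord_max : 'I_3) = dir2. Proof. exact/val_inj. Qed.
Lemma w03 : (widen_ord (leqnSn 2) (widen_ord (leqnSn 1) ord_max) : 'I_3) = dir1. Proof. exact/val_inj. Qed.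

Lemma prodA1 a (ha : 3 <= a) (x : 'I_3 -> Frac3) :
  (\prod_(i < 3 | 0 < Amat a i dir1) x i ^+ `|Amat a i dir1|%N = x dir3 ^+ 2) /\
  (\prod_(i < 3 | Amat a i dir1 < 0) x i ^+ `|Amat a i dir1|%N = x dir2 ^+ `|a|%N).
Proof.
have a0 : 0 < a by lia.
have h1 : (0 < -a) = false by apply/negbTE; lia.
have h2 : (-a < 0) = true by lia.
split; rewrite big_mkcond !big_ord_recr big_ord0 /= !mxE /= ?h1 ?h2 ?om3 ?wom3 ?w03 ?abszN;
  rewrite ?mul1r ?mulr1 //.
Qed.

Lemma prodA3 a (ha : 3 <= a) (x : 'I_3 -> Frac3) :
  (\prod_(i < 3 | 0 < (- Amat a) i dir3) x i ^+ `|(- Amat a) i dir3|%N = x dir1 ^+ 2) /\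
  (\prod_(i < 3 | (- Amat a) i dir3 < 0) x i ^+ `|(- Amat a) i dir3|%N = x dir2 ^+ `|a|%N).
Proof.
have a0 : 0 < a by lia.
have h1 : (0 < -a) = false by apply/negbTE; lia.
have h2 : (-a < 0) = true by lia.
split; rewrite big_mkcond !big_ord_recr big_ord0 /= !mxE /= ?opprK ?h1 ?h2 ?om3 ?wom3 ?w03 ?abszN;
  rewrite ?mul1r ?mulr1 //.
Qed.

Lemma u_neq0 a (ha : 3 <= a) n : u a n != 0.
Proof.
case: n => [|m]; first exact: xvar_neq0.
apply/eqP => h0.
have := u_P a m; rewrite h0 mul0r => /esym /eqP.
rewrite mulf_eq0 (negbTE (xvar_neq0 dir3)) /= tofrac_eq0 => /eqP hP.
apply: (Pp_nodiv _ ha m dir1); exists 0; by rewrite hP mulr0.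
Qed.

Lemma u_step a (ha : 3 <= a) k : (u a k.+1 ^+ 2 + x2 ^+ `|a|%N) / u a k = u a k.+2.
Proof.
by rewrite -[x2 ^+ _]/(cc a) -u_exch mulfK // u_neq0.
Qed.

Lemma run_state a (ha : 3 <= a) k :
  [/\ (run_path (Amat a) (alt31 k)).2 = (if odd k then - Amat a else Amat a),
     (run_path (Amat a) (alt31 k)).1 dir1 = (if odd k then u a k.+1 else u a k),
     (run_path (Amat a) (alt31 k)).1 dir3 = (if odd k then u a k else u a k.+1) &
     (run_path (Amat a) (alt31 k)).1 dir2 = x2].
Proof.
elim: k => [|k IH]; first by split.
have -> : run_path (Amat a) (alt31 k.+1) =
   mutate_seed (if odd k then dir3 else dir1) (run_path (Amat a) (alt31 k)) by [].
case: (run_path (Amat a) (alt31 k)) IH => x B [/= -> h1 h3 h2].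
case hk: (odd k) h1 h3 => h1 h3 /=.
- case: (prodA3 _ ha x) => -> ->. rewrite mut3 //. split=> //.
  by rewrite h1 h2 h3 u_step.
- case: (prodA1 _ ha x) => -> ->. rewrite mut1 //. split=> //.
  by rewrite h1 h2 h3 u_step.
Qed.

Lemma var_u a (ha : 3 <= a) k : (1 <= k)%N -> var_path (Amat a) (alt31 k) = u a k.+1.
Proof.
case: k => [|k] // _.
have [_ h1 h3 _] := run_state _ ha k.+1.
have -> : var_path (Amat a) (alt31 k.+1) =
  (run_path (Amat a) (alt31 k.+1)).1 (if odd k then dir3 else dir1) by [].
move: h1 h3; rewrite (_ : odd k.+1 = ~~ odd k) //.
by case: (odd k) => h1 h3; [exact: h3 | exact: h1].
Qed.

Definition dv (k : nat) : 'I_3 -> int :=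
  fun i => if i == dir1 then k%:Z else if i == dir3 then (k.-1)%:Z else 0.

Lemma G4 (F : fieldType) (U T x y : F) n : x != 0 -> y != 0 ->
  U * (x * y) ^+ n.+1 = y * T -> U = T / (x ^+ n.+1 * y ^+ n).
Proof.
move=> hx hy h.
have hX : x ^+ n.+1 != 0 by rewrite expf_neq0.
have hY : y ^+ n != 0 by rewrite expf_neq0.
rewrite exprMn (exprSr y) in h.
move: (x ^+ n.+1) (y ^+ n) hX hY h => X Y hX hY h.
have -> : U = (U * (X * (Y * y))) / (X * Y * y) by field; rewrite hX hY hy.
rewrite h. field. by rewrite hX hY hy.
Qed.

Lemma denom_u a (ha : 3 <= a) k : (1 <= k)%N -> is_denom_vector (u a k.+1) (dv k).
Proof.
case: k => [|k] // _.
exists (Pp a k.+1); split; first exact: Pp_nodiv.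
rewrite !big_ord_recr big_ord0 /= om3 wom3 w03 /dv /= mul1r.
rewrite -!exprnP expr0 mulr1.
apply: (@G4 Frac3 _ _ _ _ _ (xvar_neq0 dir1) (xvar_neq0 dir3)).
exact: u_P.
Qed.

Theorem mainTheorem17 (a : int) (ha : 3 <= a) (k : nat) (hk : (1 <= k)%N) :
  exists d1 d2 : 'I_3 -> int,
    is_denom_vector (var_path (Amat a) (alt31 k)) d1 /\
    is_denom_vector (var_path (Amat a) (alt31 k.+1)) d2 /\
    dvec_lt d1 d2.
Proof.
exists (dv k), (dv k.+1).
rewrite var_u // var_u //.
split; first exact: denom_u.
split; first exact: denom_u.
split.
  move=> i; rewrite /dv.
  case: (i == dir1); first by lia.
  case: (i == dir3) => //. case: k hk => // k _ /=; lia.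
move/(congr1 (fun f => f dir1)); rewrite /dv /=.
move/eqP; lia.
Qed.
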